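(* Let $\mathcal{G}_L=(\mathcal{V}_L,\mathcal{E}_L)$ be a coloured graph obtained from complete graphs $G_1,\dots,G_L$ by the inductive construction described in the context, with vertex weights $w(v)$ and edge weights $w(e)$. Let $t>0$ and consider the hopping Hamiltonian $H_{\mathrm{hop}}=\sum_{v,v'\in\mathcal{V}_L}\sum_{\sigma=\uparrow,\downarrow}t_{v,v'}c_{v,\sigma}^\dagger c_{v',\sigma}$, where $t_{v,v'}=w(e)t$ if $e=\{v,v'\}\in\mathcal{E}_L$, $t_{v,v}=w(v)t$, and $t_{v,v'}=0$ otherwise. Then the lowest single-electron energy of $H_{\mathrm{hop}}$ is $0$, and this eigenvalue is $(|\mathcal{V}_L|-L)$-fold degenerate (per spin direction).
   Context: Construction. Let $G_l=(V_l,E_l)$, $l=1,\dots,L$, be complete graphs with $|V_l|\ge 2$ and $E_l=\{\{v,v'\}: v,v'\in V_l, v\neq v'\}$. In each $V_l$ one vertex $v_l^0$ is painted black, all other vertices of $V_l$ are painted white. Set $\mathcal{G}_1=G_1$ with this colouring. For $l=2,\dots,L$: choose an integer $z_l$ with $0<z_l\le |V_l|-1$, choose $z_l$ white vertices of $V_l$ and identify each of them with a vertex (black or white; distinct chosen vertices with distinct vertices) of $\mathcal{V}_{l-1}$; then $\mathcal{V}_l=\mathcal{V}_{l-1}\cup V_l$ with these identifications, $\mathcal{E}_l=\mathcal{E}_{l-1}\cup E_l$ where edges joining the same two vertices are merged into one edge. A white vertex identified with a black one becomes black; two identified white vertices stay white; the black vertex $v_l^0$ is never identified with an earlier vertex.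 Thus the black vertices of $\mathcal{G}_L$ are exactly $v_1^0,\dots,v_L^0$ and the set $\mathcal{V}_L^{W}$ of white vertices has $|\mathcal{V}_L|-L$ elements; the sets $V_l,E_l$ are regarded as subsets of $\mathcal{V}_L,\mathcal{E}_L$. The weight $w(v)$ of $v\in\mathcal{V}_L$ is the number of $l$ with $v\in V_l$; the weight $w(e)$ of $e\in\mathcal{E}_L$ is the number of $l$ with $e\in E_l$. Fermions: $c_{v,\sigma},c_{v,\sigma}^\dagger$ ($v\in\mathcal{V}_L$, $\sigma\in\{\uparrow,\downarrow\}$) satisfy the canonical anticommutation relations $\{c_{v,\sigma},c_{v',\tau}\}=0$, $\{c^\dagger_{v,\sigma},c_{v',\tau}\}=\delta_{v,v'}\delta_{\sigma,\tau}$. *)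

(* Defs.v *)
From mathcomp Require Import all_boot all_order all_algebra.
Set Implicit Arguments. Unset Strict Implicit. Unset Printing Implicit Defensive.
Import Order.TTheory GRing.Theory Num.Theory.
Local Open Scope ring_scope.

(* The coloured graph G_L, described by the result of the inductive
   construction: vertex set 'I_N (= V_L), the L building blocks
   V l : {set 'I_N} (l : 'I_L, 0-based, block l corresponds to G_{l+1}),
   and the black vertex b l of block l. *)
Definition construction (N L : nat) (V : 'I_L -> {set 'I_N}) (b : 'I_L -> 'I_N) : Prop :=
  [/\ (0 < L)%N,
      \bigcup_(l < L) V l = [set: 'I_N],
      (forall l, 2 <= #|V l|)%N /\ (forall l, b l \in V l),
      (* v_l^0 is never identified with an earlier vertex *)
      (forall l m : 'I_L, (m < l)%N -> b l \notin V m) &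
      (* z_l > 0 : at least one vertex of V_l is identified with an earlier one,
         for l >= 2 (0-based l >= 1) *)
      (forall l : 'I_L, (0 < l)%N ->
         (0 < #|V l :&: \bigcup_(m < L | (m < l)%N) V m|)%N)].

Definition black N L (b : 'I_L -> 'I_N) : {set 'I_N} := [set b l | l : 'I_L].

Definition vweight N L (V : 'I_L -> {set 'I_N}) (v : 'I_N) : nat :=
  #|[set l : 'I_L | v \in V l]|.

Definition eweight N L (V : 'I_L -> {set 'I_N}) (v v' : 'I_N) : nat :=
  #|[set l : 'I_L | (v \in V l) && (v' \in V l)]|.

Definition is_edge N L (V : 'I_L -> {set 'I_N}) (v v' : 'I_N) : bool :=
  (v != v') && [exists l : 'I_L, (v \in V l) && (v' \in V l)].

(* Hopping matrix t_{v,v'} (the single-electron Hamiltonian for each spin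
   direction): H_hop = sum_{v,v',sigma} t_{v,v'} c^dag_{v,sigma} c_{v',sigma}. *)
Definition hopping (C : numClosedFieldType) N L (V : 'I_L -> {set 'I_N}) (t : C)
  : 'M[C]_N :=
  \matrix_(v, v')
    if v == v' then (vweight V v)%:R * t
    else if is_edge V v v' then (eweight V v v')%:R * t else 0.

(* Main.v *)
Require Import Defs.
From mathcomp Require Import all_boot all_order all_algebra.
Import Order.TTheory GRing.Theory Num.Theory Num.Def.
Local Open Scope ring_scope.

Definition incid (C : numClosedFieldType) {N L} (V : 'I_L -> {set 'I_N}) : 'M[C]_(L, N) :=
  \matrix_(l, v) (v \in V l)%:R.

Lemma card_sumE (L : nat) (P : pred 'I_L) (C : numClosedFieldType) :
  (#|[set l | P l]|)%:R = \sum_l (P l)%:R :> C.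
Proof.
rewrite -sum1_card natr_sum big_mkcond /=; apply: eq_bigr => l _.
by rewrite inE; case: (P l).
Qed.

Lemma hoppingE (C : numClosedFieldType) N L (V : 'I_L -> {set 'I_N}) (t : C) :
  hopping V t = t *: ((incid C V)^T *m incid C V).
Proof.
apply/matrixP => v w; rewrite !mxE.
have -> : \sum_l (incid C V)^T v l * incid C V l w = (eweight V v w)%:R.
  rewrite /eweight card_sumE; apply: eq_bigr => l _; rewrite !mxE.
  by case: (v \in V l); case: (w \in V l); rewrite ?mulr1 ?mulr0 ?mul0r.
case: eqP => [<-|/eqP vw].
  rewrite mulrC /vweight /eweight; congr (_ * _%:R).
  by apply: eq_card => l; rewrite !inE andbb.
case: ifP => [_|]; first by rewrite mulrC.
rewrite /is_edge vw /= => /negbT; rewrite negb_exists => /forallP H.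
suff -> : eweight V v w = 0%N by rewrite mulr0.
rewrite /eweight; apply/eqP; rewrite cards_eq0; apply/eqP/setP => l.
by rewrite !inE (negbTE (H l)).
Qed.

Lemma dotE (C : numClosedFieldType) k n (A : 'M[C]_(k, n)) i :
  (A *m (map_mx conjC A)^T) i i = \sum_j A i j * (A i j)^*.
Proof. by rewrite mxE; apply: eq_bigr => j _; rewrite !mxE. Qed.

Lemma dot_ge0 (C : numClosedFieldType) k n (A : 'M[C]_(k, n)) i :
  0 <= (A *m (map_mx conjC A)^T) i i.
Proof. by rewrite dotE; apply: sumr_ge0 => j _; apply: mul_conjC_ge0. Qed.

Lemma dot_eq0 (C : numClosedFieldType) k n (A : 'M[C]_(k, n)) :
  (forall i, (A *m (map_mx conjC A)^T) i i = 0) -> A = 0.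
Proof.
move=> H; apply/matrixP => i j; rewrite mxE.
have := H i; rewrite dotE => /psumr_eq0P => /(_ (fun j _ => mul_conjC_ge0 _)) /(_ j isT).
by move/eqP; rewrite mul_conjC_eq0 => /eqP.
Qed.

Lemma incid_real (C : numClosedFieldType) N L (V : 'I_L -> {set 'I_N}) :
  map_mx conjC (incid C V) = incid C V.
Proof. by apply/matrixP => l v; rewrite !mxE conjC_nat. Qed.

Lemma transferE (C : numClosedFieldType) N L (V : 'I_L -> {set 'I_N}) k
  (X : 'M[C]_(k, N)) :
  incid C V *m (map_mx conjC X)^T = (map_mx conjC (X *m (incid C V)^T))^T.
Proof. by rewrite map_mxM trmx_mul -map_trmx trmxK incid_real. Qed.

Lemma ker_lem {C : numClosedFieldType} {N L} {V : 'I_L -> {set 'I_N}} {t : C} {k}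
  {X : 'M[C]_(k, N)} : t != 0 -> X *m hopping V t = 0 -> X *m (incid C V)^T = 0.
Proof.
move=> t0; rewrite hoppingE -scalemxAr => /eqP; rewrite scalemx_eq0 (negbTE t0) /=.
move=> /eqP H; apply: dot_eq0 => i.
have : X *m ((incid C V)^T *m incid C V) *m (map_mx conjC X)^T = 0.
  by rewrite H mul0mx.
by rewrite !mulmxA -(mulmxA _ (incid C V)) transferE => ->; rewrite mxE.
Qed.

Lemma rank_incid (C : numClosedFieldType) N L (V : 'I_L -> {set 'I_N}) (b : 'I_L -> 'I_N) :
  construction V b -> \rank (incid C V) = L.
Proof.
case=> _ _ [_ bV] bnot _.
apply/eqP; rewrite eqn_leq rank_leq_row /=.
pose P : 'M[C]_(N, L) := \matrix_(v, l) (v == b l)%:R.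
have E : incid C V *m P = \matrix_(m, l) (b l \in V m)%:R.
  apply/matrixP => m l; rewrite !mxE (bigD1 (b l)) //= big1 ?addr0.
    by rewrite !mxE eqxx mulr1.
  by move=> v /negbTE vb; rewrite !mxE vb mulr0.
have U : incid C V *m P \in unitmx.
  rewrite unitmxE E det_trig.
    rewrite big1 ?unitr1 // => l _; by rewrite mxE bV.
  apply/is_trig_mxP => m l ml; rewrite mxE.
  by rewrite (negbTE (bnot l m ml)).
by rewrite -{1}(mxrank_unit U) mxrankM_maxl.
Qed.

Lemma LltN N L (V : 'I_L -> {set 'I_N}) (b : 'I_L -> 'I_N) :
  construction V b -> (L < N)%N.
Proof.
case=> L0 _ [c2 bV] bnot _.
have binj : injective b.
  move=> l m e; case: (ltngtP l m) => h; last exact: val_inj.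
    by have := bnot m l h; rewrite -e bV.
  by have := bnot l m h; rewrite e bV.
pose l0 : 'I_L := Ordinal L0.
have : (0 < #|V l0 :\ b l0|)%N.
  by have := c2 l0; rewrite (cardsD1 (b l0)) bV.
case/card_gt0P => w; rewrite !inE => /andP [wb wV].
have : black b \proper [set: 'I_N].
  apply/properP; split; first exact: subsetT.
  exists w => //; apply/negP => /imsetP [j _ e].
  case: (posnP j) => l0'.
    have el : j = l0 by apply/val_inj; rewrite /= l0'.
    by move: wb; rewrite e el eqxx.
  by have := bnot j l0 l0'; rewrite -e wV.
move/proper_card; rewrite cardsT card_ord /black card_imset //.
by rewrite card_ord.
Qed.

Lemma rank_eig (C : numClosedFieldType) (N L : nat)
    (V : 'I_L -> {set 'I_N}) (b : 'I_L -> 'I_N) (t : C) :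
  construction V b -> t != 0 ->
  \rank (eigenspace (hopping V t) 0) = (N - L)%N.
Proof.
move=> cV t0; rewrite /eigenspace (_ : 0%:M = 0) ?subr0; last by apply/matrixP => i j; rewrite !mxE mul0rn.
suff -> : \rank (kermx (hopping V t)) = \rank (kermx (incid C V)^T).
  by rewrite mxrank_ker mxrank_tr (@rank_incid C _ _ _ _ cV).
apply/eqP; rewrite eqn_leq !mxrankS //.
  apply/sub_kermxP; rewrite hoppingE -scalemxAr mulmxA mulmx_ker mul0mx.
  by rewrite scaler0.
by apply/sub_kermxP; apply: (ker_lem t0); exact: mulmx_ker.
Qed.

Theorem proposition1 (C : numClosedFieldType) (N L : nat)
    (V : 'I_L -> {set 'I_N}) (b : 'I_L -> 'I_N) (t : C) :
  construction V b -> 0 < t ->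
  [/\ eigenvalue (hopping V t) 0,
      (forall a : C, eigenvalue (hopping V t) a -> 0 <= a) &
      \rank (eigenspace (hopping V t) 0) = (N - L)%N].
Proof.
move=> cV tp; have t0 : t != 0 by rewrite gt_eqF.
have R := @rank_eig C _ _ _ _ _ cV t0.
split=> //.
  rewrite /eigenvalue -mxrank_eq0 R subn_eq0 -ltnNge; exact: (@LltN _ _ _ _ cV).
move=> a /eigenvalueP [v va v0].
have : v *m hopping V t *m (map_mx conjC v)^T
       = a *: (v *m (map_mx conjC v)^T) by rewrite va scalemxAl.
rewrite hoppingE -scalemxAr -scalemxAl !mulmxA -(mulmxA (v *m _)) transferE.
move/matrixP => /(_ 0 0); rewrite !mxE.
set s1 := \sum_j _.
set s2 := \sum_j _.
have s1ge : 0 <= s1.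
  have := @dot_ge0 _ _ _ (v *m (incid C V)^T) 0; by rewrite mxE.
have s2gt : 0 < s2.
  have := @dot_ge0 _ _ _ v 0; rewrite mxE -/s2 le_eqVlt => /orP [/eqP s20|//].
  case/negP: v0; apply/eqP/dot_eq0 => i; rewrite (ord1 i) mxE -/s2 -s20.
  by [].
move=> e.
have -> : a = t * s1 / s2 by rewrite e mulfK // gt_eqF.
by apply: divr_ge0; [apply: mulr_ge0; [apply: ltW|] | apply: ltW].
Qed.
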